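(* Let $\mathscr{H}$ be the class of all (finite, simple) graphs $G$ on at least twelve vertices with $\gamma(G)=2$. Then $\mathscr{H}$ is recognizable: if $G\in\mathscr{H}$ and $H$ is any graph with $\mathscr{D}(H)=\mathscr{D}(G)$, then $H\in\mathscr{H}$.
   Context: All graphs are finite, simple and undirected. $\gamma(G)$ is the domination number of $G$ (the minimum size of a set $S\subseteq V(G)$ such that every vertex outside $S$ has a neighbour in $S$). For a vertex $v$, the card $G-v$ is the unlabeled graph obtained by deleting $v$ and its incident edges; the deck $\mathscr{D}(G)$ is the multiset of all cards of $G$ (up to isomorphism). A graph $H$ with $\mathscr{D}(H)=\mathscr{D}(G)$ is a reconstruction of $G$. A class $\mathcal{F}$ of graphs is recognizable if every reconstruction of every graph in $\mathcal{F}$ also lies in $\mathcal{F}$. *)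

(* Defs.v *)
From mathcomp Require Import all_boot.
Set Implicit Arguments. Unset Strict Implicit. Unset Printing Implicit Defensive.

Definition simple_graph (T : finType) (e : rel T) : Prop :=
  symmetric e /\ irreflexive e.

Definition dominating (T : finType) (e : rel T) (D : {set T}) : bool :=
  [forall x, (x \notin D) ==> [exists y in D, e x y]].

(* Domination number: minimum size of a dominating set (the full vertex set
   is always dominating, so #|T| is a valid initial bound). *)
Definition domination_number (T : finType) (e : rel T) : nat :=
  \big[minn/#|T|]_(D : {set T} | dominating e D) #|D|.

Definition iso_induced (T1 T2 : finType) (e1 : rel T1) (e2 : rel T2)
  (A : {set T1}) (B : {set T2}) : Prop :=
  exists f : T1 -> T2,
    [/\ {in A &, injective f}, f @: A = B &
        {in A &, forall x y, e2 (f x) (f y) = e1 x y}].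

(* Equal decks
   (equality of the multisets of isomorphism classes of cards) means:
   there is a bijection sigma : V(G) -> V(H) with G - v ~= H - sigma v. *)
Definition same_deck (T1 T2 : finType) (e1 : rel T1) (e2 : rel T2) : Prop :=
  exists sigma : T1 -> T2, bijective sigma /\
    forall v : T1, iso_induced e1 e2 (~: [set v]) (~: [set sigma v]).

(* Main.v *)
Require Import Defs.
From mathcomp Require Import all_boot.
From mathcomp Require Import zify.
From Stdlib Require Import ZArith Lia.

Lemma algZ (m B d0 d1 d2 d3 : Z) : (0 <= m)%Z ->
  (d1 = - ((m+2) * d0))%Z -> (2*d2 = - ((m+1) * d1))%Z -> (3*d3 = - (m*d2))%Z ->
  (-B <= d3 <= B)%Z -> (6*B < m*(m+1)*(m+2))%Z -> d0 = 0%Z.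
Proof.
move=> hm e1 e2 e3 hb hB.
have e4 : (6*d3 = - (m * (m+1) * (m+2) * d0))%Z.
  have -> : (6*d3 = 2 * (3 * d3))%Z by ring.
  rewrite e3.
  have -> : (2 * - (m*d2) = - (m * (2*d2)))%Z by ring.
  rewrite e2 e1. ring.
set P := (m*(m+1)*(m+2))%Z in e4 hB.
destruct (Z.lt_trichotomy d0 0) as [h|[h|h]]; auto.
- have : (P * d0 <= - P)%Z by nia. lia.
- have : (P <= P * d0)%Z by nia. lia.
Qed.

Lemma alg (M B x0 x1 x2 x3 y0 y1 y2 y3 : nat) :
  M*x0 + x1 = M*y0 + y1 -> (M-1)*x1 + 2*x2 = (M-1)*y1 + 2*y2 ->
  (M-2)*x2+3*x3 = (M-2)*y2+3*y3 -> x3 <= B -> y3 <= B -> 6*B < M*(M-1)*(M-2) -> 2 <= M -> x0 = y0.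
Proof.
case: M => [|[|m]] //= h1 h2 h3 hx hy hB _.
rewrite !subSS subn0 in h2 h3 hB.
have := @algZ (Z.of_nat m) (Z.of_nat B) (Z.of_nat x0 - Z.of_nat y0)%Z
  (Z.of_nat x1 - Z.of_nat y1)%Z (Z.of_nat x2 - Z.of_nat y2)%Z (Z.of_nat x3 - Z.of_nat y3)%Z.
move=> H.
have : (Z.of_nat x0 - Z.of_nat y0 = 0)%Z; last lia.
apply: H; try lia.
Qed.
Set Implicit Arguments. Unset Strict Implicit. Unset Printing Implicit Defensive.

Definition undom (T : finType) (e : rel T) (A D : {set T}) : {set T} :=
  [set x in A | (x \notin D) && ~~ [exists y in D, e x y]].

Definition cnt (T : finType) (e : rel T) (j : nat) (A : {set T}) (k : nat) : nat :=
  #|[set D : {set T} | [&& D \subset A, #|D| == j & #|undom e A D| == k]]|.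

Lemma dominatingE (T : finType) (e : rel T) D :
  dominating e D = (undom e setT D == set0).
Proof.
apply/forallP/eqP => [H|H].
- apply/setP=> x; rewrite !inE; have:=H x.
  by case: (x \in D) => //=; case: [exists _ in _, _].
- move=> x; move/setP: H => /(_ x); rewrite !inE.
  by case: (x \in D) => //=; case: [exists _ in _, _].
Qed.

Lemma sumb (T : finType) (A : {set T}) : \sum_x ((x \in A) : nat) = #|A|.
Proof. rewrite -sum1_card [LHS](big_mkcond xpredT) /= [RHS]big_mkcond /=. apply: eq_bigr => x _. by case: (x \in A). Qed.

Lemma card_sum (T : finType) (P : pred T) : #|[set x | P x]| = \sum_x (P x : nat).
Proof. rewrite -sum1dep_card [RHS](big_mkcond xpredT) /= big_mkcond /=. apply: eq_bigr => x _. by case: (P x). Qed.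

Section Iso.
Variables (T1 T2 : finType) (e1 : rel T1) (e2 : rel T2) (A : {set T1}) (B : {set T2}).
Variable f : T1 -> T2.
Hypotheses (finj : {in A &, injective f}) (fA : f @: A = B)
  (fe : {in A &, forall x y, e2 (f x) (f y) = e1 x y}).

Lemma memf (D : {set T1}) x : D \subset A -> x \in A -> (f x \in f @: D) = (x \in D).
Proof.
move=> sDA xA; apply/imsetP/idP => [[y yD ey]|xD]; last by exists x.
by rewrite (finj xA (subsetP sDA _ yD) ey).
Qed.

Lemma exf (D : {set T1}) x : D \subset A -> x \in A ->
  [exists z in f @: D, e2 (f x) z] = [exists z in D, e1 x z].
Proof.
move=> sDA xA; apply/existsP/existsP => [[z' /andP[/imsetP[z zD ->] h]]|[z /andP[zD h]]].
- by exists z; rewrite zD /= -fe // (subsetP sDA _ zD).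
- by exists (f z); rewrite imset_f //= fe // (subsetP sDA _ zD).
Qed.

Lemma undomf (D : {set T1}) : D \subset A -> undom e2 B (f @: D) = f @: undom e1 A D.
Proof.
move=> sDA; apply/setP => y; apply/idP/idP.
- rewrite inE => /andP[yB h]; move: yB h; rewrite -fA => /imsetP[x xA ->].
  rewrite memf // exf // => h; apply: imset_f; by rewrite inE xA.
- case/imsetP => x; rewrite inE => /andP[xA h] ->.
  by rewrite inE -fA imset_f //= memf // exf.
Qed.

Lemma cardf (D : {set T1}) : D \subset A -> #|f @: D| = #|D|.
Proof. move=> sDA; apply: card_in_imset => x y xD yD; apply: finj; exact: (subsetP sDA). Qed.

Lemma cnt_iso j k : cnt e1 j A k = cnt e2 j B k.
Proof.
rewrite /cnt.
set S1 := [set D | _]; set S2 := [set D | _].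
have key (D : {set T1}) : D \subset A -> [&& f @: D \subset B, #|f @: D| == j & #|undom e2 B (f @: D)| == k]
   = [&& D \subset A, #|D| == j & #|undom e1 A D| == k].
  move=> sDA; rewrite undomf // sDA -fA imsetS //= cardf // cardf //.
  by apply/subsetP => x; rewrite inE => /andP[].
have -> : S2 = (fun D : {set T1} => f @: D) @: S1.
  apply/setP => D'; apply/idP/idP.
  - rewrite inE => /and3P[sDB hj hk].
    pose D := A :&: f @^-1: D'.
    have sDA : D \subset A by apply: subsetIl.
    have eD : f @: D = D'.
      apply/setP => y; apply/imsetP/idP => [[x]|yD].
      + by rewrite !inE => /andP[_ h] ->.
      + move: (subsetP sDB _ yD); rewrite -fA => /imsetP[x xA ey].
        by exists x; rewrite // !inE xA -ey.
    apply/imsetP; exists D; last by rewrite eD.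
    by rewrite inE -key // eD sDB hj hk.
  - case/imsetP => D; rewrite inE => hD ->.
    have sDA : D \subset A by case/and3P: hD.
    by rewrite inE key.
apply/esym/card_in_imset => D D'; rewrite !inE => /and3P[sDA _ _] /and3P[sDA' _ _] eq.
apply/setP => x; case xA: (x \in A).
- by rewrite -(memf sDA xA) -(memf sDA' xA) eq.
- apply/idP/idP => h; [move: (subsetP sDA _ h) | move: (subsetP sDA' _ h)]; by rewrite xA.
Qed.
End Iso.

Lemma cnt_rec (T : finType) (e : rel T) j k :
  \sum_w cnt e j (~:[set w]) k =
  (#|T| - j - k) * cnt e j setT k + k.+1 * cnt e j setT k.+1.
Proof.
rewrite /cnt.
under eq_bigr do rewrite card_sum.
rewrite exchange_big /= !card_sum big_distrr /= [X in _ + X]big_distrr /= -big_split /=.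
apply: eq_bigr => D _.
rewrite subsetT /=.
set U := undom e setT D.
have hU w : undom e (~:[set w]) D = U :\ w.
  by apply/setP=> x; rewrite /U /undom !inE andbA.
have hs w : (D \subset ~:[set w]) = (w \notin D).
  apply/subsetP/idP => [h|h x xD].
  - by apply/negP => wD; move: (h _ wD); rewrite !inE eqxx.
  - by rewrite !inE; apply/eqP => exw; move: h; rewrite -exw xD.
have UD w : w \in U -> w \notin D by rewrite /U inE => /andP[_ /andP[]].
clearbody U.
case: (#|D| =P j) => hj /=; last first.
  by rewrite !muln0 big1 // => w _; case: (_ \subset _).
under eq_bigr do rewrite hs hU.
have pw w : (w \notin D) && (#|U :\ w| == k) =
   (w \in U) * (#|U| == k.+1) + (w \in ~:(U :|: D)) * (#|U| == k) :> nat.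
  have := cardsD1 w U.
  case wU: (w \in U) => /= hc.
  - by rewrite in_setC in_setU wU /= (UD w wU) /= hc add1n eqSS mul1n addn0.
  - rewrite in_setC in_setU wU /= hc add0n mul0n add0n; by case: (w \in D); rewrite /= ?mul0n ?mul1n.
rewrite (eq_bigr _ (fun w _ => pw w)) big_split /= -!big_distrl /= !sumb.
have hc : #|~:(U :|: D)| + #|U| + j = #|T|.
  have := cardsC (U :|: D); have := cardsU U D.
  have -> : U :&: D = set0.
    by apply/setP => x; rewrite in_setI in_set0; case xU: (x \in U) => //=; rewrite (negbTE (UD x xU)).
  rewrite cards0 subn0 hj => h1 <-; rewrite h1. lia.
case: eqP => h1; case: eqP => h2 /=; rewrite ?muln0 ?muln1 ?addn0 ?add0n -?hc; try lia.
Qed.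

Lemma c2 n : 'C(n,2) * 2 = n * (n-1).
Proof. rewrite bin2 -divn2. have : 2 %| n * n.-1. rewrite dvdn2 oddM; case: n=>//= n; by case: (odd n). lia. Qed.

Lemma bigmin_le (T : finType) (P : pred T) (F : T -> nat) x i0 :
  P i0 -> \big[minn/x]_(i | P i) F i <= F i0.
Proof.
move=> Pi0; have : i0 \in index_enum T := mem_index_enum i0.
elim: (index_enum T) => [//|a r IH].
rewrite inE big_cons => /orP[/eqP <-|ir]; first by rewrite Pi0 geq_minl.
case: (P a); last exact: IH.
exact: leq_trans (geq_minr _ _) (IH ir).
Qed.

Lemma bigmin_mem (T : finType) (P : pred T) (F : T -> nat) x :
  \big[minn/x]_(i | P i) F i = x \/ exists i, P i /\ \big[minn/x]_(i | P i) F i = F i.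
Proof.
set b := (X in X = x \/ _).
have : b = x \/ exists i, P i /\ b = F i.
  rewrite /b; apply: (big_ind (fun y => y = x \/ exists i, P i /\ y = F i)).
  - by left.
  - by move=> y z hy hz; rewrite /minn; case: ifP.
  - by move=> i Pi; right; exists i.
by [].
Qed.

Lemma dn2 (T : finType) (e : rel T) : True.
Proof. by []. Qed.
Lemma dn2' (T : finType) (e : rel T) : 3 <= #|T| ->
  domination_number e = 2 <->
  ((forall D, dominating e D -> 2 <= #|D|) /\ exists D, dominating e D /\ #|D| = 2).
Proof.
move=> h3; rewrite /domination_number; split.
- move=> h; split.
  + by move=> D hD; rewrite -h; apply: bigmin_le.
  + case: (bigmin_mem (fun D => dominating e D) (fun D : {set T} => #|D|) #|T|) => [h'|[D [hD h']]].
    * by move: h3; rewrite -h' h.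
    * by exists D; rewrite -h'.
- move=> [hl [D [hD h2]]]; apply/eqP; rewrite eqn_leq; apply/andP; split.
  + by rewrite -h2; apply: bigmin_le.
  + case: (bigmin_mem (fun D => dominating e D) (fun D : {set T} => #|D|) #|T|) => [->|[D' [hD' ->]]].
    * exact: ltnW.
    * exact: hl.
Qed.

Lemma cnt_bnd (T : finType) (e : rel T) j k : cnt e j setT k <= 'C(#|T|, j).
Proof.
rewrite -card_draws; apply: subset_leq_card; apply/subsetP => D.
by rewrite !inE => /and3P[_ -> _].
Qed.

Lemma num1 n : 12 <= n -> 6 * n < (n-1)*(n-1-1)*(n-1-2).
Proof. move=> h; have [m ->] : exists m, n = m + 12 by exists (n - 12); lia.
have -> : m + 12 - 1 = m + 11 by lia. have -> : m + 11 - 1 = m + 10 by lia.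
have -> : m + 11 - 2 = m + 9 by lia. nia. Qed.

Lemma num2 n : 12 <= n -> 6 * 'C(n, 2) < (n-2)*(n-2-1)*(n-2-2).
Proof. move=> h; have := c2 n; have [m ->] : exists m, n = m + 12 by exists (n - 12); lia.
have -> : m + 12 - 1 = m + 11 by lia. have -> : m + 12 - 2 = m + 10 by lia.
have -> : m + 10 - 1 = m + 9 by lia. have -> : m + 10 - 2 = m + 8 by lia. nia. Qed.

Theorem theorem12 (T1 T2 : finType) (e1 : rel T1) (e2 : rel T2) :
  simple_graph e1 -> simple_graph e2 ->
  12 <= #|T1| -> domination_number e1 = 2 ->
  same_deck e2 e1 ->
  12 <= #|T2| /\ domination_number e2 = 2.
Proof.
move=> _ _ h12 hG [s [sb hs]].
have hn : #|T2| = #|T1| := bij_eq_card sb.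
have rec j k : (#|T1| - j - k) * cnt e2 j setT k + k.+1 * cnt e2 j setT k.+1 =
               (#|T1| - j - k) * cnt e1 j setT k + k.+1 * cnt e1 j setT k.+1.
  have := cnt_rec e2 j k; have := cnt_rec e1 j k; rewrite hn => <- <-.
  rewrite [RHS](reindex s) /=; last exact: onW_bij.
  apply: eq_bigr => w _; have [f [fi fA fe]] := hs w. exact: (cnt_iso fi fA fe j k).
have key j : 6 * 'C(#|T1|, j) < (#|T1| - j) * (#|T1| - j - 1) * (#|T1| - j - 2) ->
    2 <= #|T1| - j -> cnt e2 j setT 0 = cnt e1 j setT 0.
  move=> hB hM.
  have r0 := rec j 0; rewrite subn0 mul1n [_ * cnt e1 _ _ 1]mul1n in r0.
  have r1 := rec j 1; have r2 := rec j 2.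
  apply: (alg _ _ _ _ _ _ _ _ _ _ r0 r1 r2 _ _ hB hM).
  - by rewrite -hn; apply: cnt_bnd.
  - exact: cnt_bnd.
have k1 : cnt e2 1 setT 0 = cnt e1 1 setT 0.
  apply: key; [rewrite bin1; exact: num1 | lia].
have k2 : cnt e2 2 setT 0 = cnt e1 2 setT 0.
  apply: key; [exact: num2 | lia].
have [hl [D0 [hD0 hD02]]] := (dn2' e1 (leq_trans (isT : 3 <= 12) h12)).1 hG.
have memS (T : finType) (e : rel T) j D :
   (D \in [set D : {set T} | [&& D \subset setT, #|D| == j & #|undom e setT D| == 0]])
   = (#|D| == j) && dominating e D.
  by rewrite inE subsetT dominatingE cards_eq0.
have z1 : cnt e1 1 setT 0 = 0.
  apply/eqP; rewrite cards_eq0; apply/eqP/setP => D; rewrite memS in_set0.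
  apply/negP => /andP[/eqP h1 hD]; have := hl _ hD; by rewrite h1.
have p2 : 0 < cnt e1 2 setT 0.
  apply/card_gt0P; exists D0; by rewrite memS hD02 eqxx hD0.
split; first by rewrite hn.
apply/(dn2' e2); first by rewrite hn; exact: leq_trans (isT : 3 <= 12) h12.
split.
- move=> D hD; case: (ltnP 1 #|D|) => // hle.
  case hc : #|D| => [|[|n]]; last by rewrite hc in hle.
  + move/eqP: hc; rewrite cards_eq0 => /eqP eD; subst D.
    have : 0 < #|T2| by rewrite hn; exact: leq_trans _ h12.
    case/card_gt0P => x _; move/forallP: hD => /(_ x); rewrite inE /=.
    by case/existsP => y; rewrite inE.
  + have : 0 < cnt e2 1 setT 0 by apply/card_gt0P; exists D; rewrite memS hc eqxx hD.
    by rewrite k1 z1.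
- rewrite -k2 in p2; case/card_gt0P: p2 => D1; rewrite memS => /andP[/eqP h hD1].
  by exists D1.
Qed.
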